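(* Let $\mathcal R=\{1,\dots,N\}$ be a set of robots communicating over a connected undirected graph $\mathcal G=(\mathcal R,\mathcal E)$ with diameter $d(\mathcal G)$, and let $\mathcal N_i$ denote the neighbors of robot $i$. Each robot $i$ has a finite candidate action set $\mathcal V_i$; let $\mathcal V=\bigcup_{i\in\mathcal R}\mathcal V_i$ and let $f:2^{\mathcal V}\to\mathbb R$ be a monotone non-decreasing submodular set function (writing $f(v)$ for $f(\{v\})$). Let $K\le N$ be a positive integer. Consider the following synchronous distributed procedure (GenerateRemovals), executed by every robot $i$ with a local set $\mathcal S_1^i$ initialized to $\emptyset$: in each round, (1) if $\mathcal S_1^i=\emptyset$, robot $i$ sets $\mathcal S_1^i\leftarrow\{s_i\}$ with $s_i\in\arg\max_{v\in\mathcal V_i} f(v)$ and records $f(s_i)$; (2) robot $i$ sets $\mathcal S_1^i\leftarrow \mathcal S_1^i\cup\bigcup_{j\in\mathcal N_i}\mathcal S_1^j$ using the sets most recently sent by its neighbors; (3) with $M=\min(K,|\mathcal S_1^i|)$, robot $i$ replaces $\mathcal S_1^i$ by the $M$ actions of $\mathcal S_1^i$ having the largest values $f(s)$ (sorting the values in descending order); (4) robot $i$ sends $\mathcal S_1^i$ together with the values $f(s)$, $s\in\mathcal S_1^i$, to all its neighbors. Then: (i) (approximation performance) the final set of every robot satisfies $\mathcal S_1^i=\mathcal S_1$, where $\mathcal S_1$ is the $K$-max consensus result, i.e. the set of the $K$ actions with the largest values $f(s_r)$ among the robots' individual best actions $\{s_r: r\in\mathcal R\}$; (ii) (convergence time)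 the procedure takes $d(\mathcal G)$ rounds to converge; (iii) (computational complexity) the computational complexity (number of evaluations of $f$) for every robot $i$ is at most $\mathcal O(|\mathcal V_i|)$.
   Context: This procedure is Phase I of a distributed algorithm for resilient multi-robot action selection: the robots must choose a set $\mathcal S\subseteq\mathcal V$ with $|\mathcal S\cap\mathcal V_i|=1$ for every $i$, to maximize $\min_{\mathcal F\subseteq\mathcal S,\,|\mathcal F|\le K} f(\mathcal S\setminus\mathcal F)$, where $\mathcal F$ models actions of up to $K$ robots whose sensors are attacked (robots with attacked sensors can still communicate). Phase I computes the set $\mathcal S_1$ used to approximate the worst-case removal set. Communication is synchronous; one round consists of one local computation and one exchange with neighbors. *)

(* Defs.v *)
From HB Require Import structures.
From mathcomp Require Import all_boot all_order all_algebra.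
Set Implicit Arguments. Unset Strict Implicit. Unset Printing Implicit Defensive.
Import Order.TTheory GRing.Theory Num.Theory.
Local Open Scope ring_scope.

Definition monotone_setfun (R : realFieldType) (V : finType) (f : {set V} -> R) :=
  forall A B : {set V}, A \subset B -> f A <= f B.

Definition submodular (R : realFieldType) (V : finType) (f : {set V} -> R) :=
  forall A B : {set V}, f (A :|: B) + f (A :&: B) <= f A + f B.

Definition walkb (N : nat) (adj : rel 'I_N) (n : nat) (i j : 'I_N) : bool :=
  [exists p : n.-tuple 'I_N, path adj i p && (last i p == j)].

(* shortest-path distance (in a connected graph it is < N) *)
Definition gdist (N : nat) (adj : rel 'I_N) (i j : 'I_N) : nat :=
  find (fun n => walkb adj n i j) (iota 0 N).

Definition diameter (N : nat) (adj : rel 'I_N) : nat :=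
  (\max_(i < N) \max_(j < N) gdist adj i j)%N.

Definition better (R : realFieldType) (V : finType) (f : {set V} -> R) (a b : V) : bool :=
  (f [set b] < f [set a]) || ((f [set a] == f [set b]) && (enum_rank a < enum_rank b)%N).

Definition best_set (R : realFieldType) (V : finType) (N : nat)
    (Vi : 'I_N -> {set V}) (f : {set V} -> R) (r : 'I_N) : {set V} :=
  [set v in Vi r | [forall w in Vi r, ~~ better f w v]].

Definition kmax_consensus (R : realFieldType) (V : finType) (N : nat)
    (Vi : 'I_N -> {set V}) (f : {set V} -> R) (K : nat) : {set V} :=
  let C := \bigcup_(r < N) best_set Vi f r in
  [set s in C | (#|[set t in C | better f t s]| < K)%N].

(* Computations querying the oracle f (to count evaluations of f)      *)
Inductive comp (V : finType) (R A : Type) : Type :=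
  | Ret : A -> comp V R A
  | Query : {set V} -> (R -> comp V R A) -> comp V R A.
Arguments Ret {V R A}.
Arguments Query {V R A}.

Fixpoint cbind (V : finType) (R A B : Type) (c : comp V R A) (k : A -> comp V R B)
    : comp V R B :=
  match c with
  | Ret a => k a
  | Query X g => Query X (fun r => cbind (g r) k)
  end.

Fixpoint run (V : finType) (R A : Type) (f : {set V} -> R) (c : comp V R A) : A * nat :=
  match c with
  | Ret a => (a, 0%N)
  | Query X g => let p := run f (g (f X)) in (p.1, p.2.+1)
  end.

Fixpoint eval_all (V : finType) (R : Type) (vs : seq V) : comp V R (seq (V * R)) :=
  match vs with
  | [::] => Ret [::]
  | v :: vs' => Query [set v] (fun r => cbind (eval_all R vs') (fun l => Ret ((v, r) :: l)))
  end.

Definition betterP (R : realFieldType) (V : finType) (a b : V * R) : bool :=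
  (b.2 < a.2) || ((a.2 == b.2) && (enum_rank a.1 < enum_rank b.1)%N).

Definition best_of (R : realFieldType) (V : finType) (l : seq (V * R)) : seq (V * R) :=
  if l is p :: l' then [:: foldl (fun q x => if betterP x q then x else q) p l'] else [::].

Definition topK (R : realFieldType) (V : finType) (K : nat) (u : seq (V * R)) : seq (V * R) :=
  [seq p <- u | (count (fun q => betterP q p) u < K)%N].

Definition merge (R : realFieldType) (V : finType) (K : nat)
    (st : seq (V * R)) (recv : seq (seq (V * R))) : seq (V * R) :=
  topK K (undup (st ++ flatten recv)).

Definition round_comp (R : realFieldType) (V : finType) (N : nat)
    (Vi : 'I_N -> {set V}) (K : nat) (i : 'I_N)
    (st : seq (V * R)) (recv : seq (seq (V * R))) : comp V R (seq (V * R)) :=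
  cbind (if st is [::] then cbind (eval_all R (enum (Vi i))) (fun l => Ret (best_of l))
         else Ret st)
        (fun st1 => Ret (merge K st1 recv)).

(* synchronous execution: sim t i = (S_1^i after round t, i.e. the set sent
   at step (4) of round t ; number of evaluations of f by robot i in rounds 1..t). *)
Fixpoint sim (R : realFieldType) (V : finType) (N : nat) (adj : rel 'I_N)
    (Vi : 'I_N -> {set V}) (f : {set V} -> R) (K : nat) (t : nat)
    : 'I_N -> seq (V * R) * nat :=
  match t with
  | 0 => fun _ => ([::], 0%N)
  | t'.+1 => fun i =>
      let prev := sim adj Vi f K t' in
      let recv := [seq (prev j).1 | j <- enum 'I_N & adj i j] in
      let r := run f (round_comp Vi K i (prev i).1 recv) in
      (r.1, ((prev i).2 + r.2)%N)
  end.

(* the set held by robot i after t exchange rounds: the output of its local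
   computation (steps (1)-(3)) that incorporates the sets received from its
   neighbours in the t-th exchange, i.e. S_1^i computed in round t+1
   (for t = 0: the initial {s_i}, no communication). *)
Definition final_set (R : realFieldType) (V : finType) (N : nat) (adj : rel 'I_N)
    (Vi : 'I_N -> {set V}) (f : {set V} -> R) (K : nat) (i : 'I_N) (t : nat) : {set V} :=
  [set x | x \in map fst (sim adj Vi f K t.+1 i).1].

Definition evals (R : realFieldType) (V : finType) (N : nat) (adj : rel 'I_N)
    (Vi : 'I_N -> {set V}) (f : {set V} -> R) (K : nat) (i : 'I_N) (t : nat) : nat :=
  (sim adj Vi f K t i).2.

(* Main.v *)
Require Import Defs.
From HB Require Import structures.
From mathcomp Require Import all_boot all_order all_algebra.
Import Order.TTheory GRing.Theory Num.Theory.
Local Open Scope ring_scope.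
Set Implicit Arguments. Unset Strict Implicit.

Lemma better_irr (R : realFieldType) (V : finType) (f : {set V} -> R) a :
  ~~ better f a a.
Proof. by rewrite /better ltxx eqxx ltnn. Qed.

Lemma better_trans (R : realFieldType) (V : finType) (f : {set V} -> R) a b c :
  better f a b -> better f b c -> better f a c.
Proof.
rewrite /better => /orP[h1|/andP[/eqP e1 r1]] /orP[h2|/andP[/eqP e2 r2]];
  apply/orP.
- by left; exact: lt_trans h2 h1.
- by left; rewrite -e2.
- by left; rewrite e1.
- by right; rewrite e1 e2 eqxx (ltn_trans r1 r2).
Qed.

Lemma better_total (R : realFieldType) (V : finType) (f : {set V} -> R) a b :
  a != b -> better f a b || better f b a.
Proof.
move=> ab; rewrite /better.
case: (ltgtP (f [set a]) (f [set b])) => //= e.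
rewrite ?e ?eqxx /=.
case: (ltngtP (enum_rank a) (enum_rank b)) => // /val_inj/enum_rank_inj eab.
by rewrite eab eqxx in ab.
Qed.

Lemma nbetter (R : realFieldType) (V : finType) (f : {set V} -> R) a b :
  ~~ better f a b -> (a == b) || better f b a.
Proof.
move=> nab; case: eqP => //= /eqP ab.
by move: (better_total f ab); rewrite (negbTE nab).
Qed.

Definition cst (R : realFieldType) (V : finType) (f : {set V} -> R) (p : V * R) :=
  p.2 == f [set p.1].

Lemma bP (R : realFieldType) (V : finType) (f : {set V} -> R) p q :
  cst f p -> cst f q -> betterP p q = better f p.1 q.1.
Proof. by rewrite /cst /betterP /better => /eqP -> /eqP ->. Qed.

Lemma cst_eq (R : realFieldType) (V : finType) (f : {set V} -> R) p q :
  cst f p -> cst f q -> p.1 = q.1 -> p = q.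
Proof.
case: p q => [a x] [b y]; rewrite /cst /= => /eqP -> /eqP -> ->. by [].
Qed.

Lemma foldl_max (R : realFieldType) (V : finType) (f : {set V} -> R) l (p : V * R) :
  all (cst f) (p :: l) ->
  let q := foldl (fun q x => if betterP x q then x else q) p l in
  q \in p :: l /\ (forall x, x \in p :: l -> ~~ betterP x q).
Proof.
elim: l p => [|y l IH] p /=.
  move=> _; split; first by rewrite inE.
  by move=> x; rewrite inE => /eqP ->; rewrite /betterP ltxx eqxx ltnn.
move=> /and3P[cp cy cl].
set p' := if betterP y p then y else p.
have cp' : cst f p' by rewrite /p'; case: ifP.
have [qin qmax] := IH p' (ltac:(by rewrite /= cp' cl)).
set q := foldl _ p' l in qin qmax *.
have cq : cst f q.
  move: qin; rewrite inE => /orP[/eqP -> //|ql].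
  by move/allP: cl => /(_ _ ql).
split.
  move: qin; rewrite !inE => /orP[/eqP ->|->]; last by rewrite !orbT.
  by rewrite /p'; case: ifP => _; rewrite eqxx ?orbT.
move=> x; rewrite !inE => /or3P[/eqP ->|/eqP ->|xl]; last first.
- by apply: qmax; rewrite inE xl orbT.
- rewrite /p' in qmax; case: ifP qmax => hyp qmax.
    by apply: qmax; rewrite inE eqxx.
  rewrite (bP cy cq); apply/negP => byq.
  move: hyp; rewrite (bP cy cp) => /negbT/nbetter/orP[/eqP e|bpy].
    by move: (qmax p); rewrite inE eqxx (bP cp cq) -e byq => /(_ isT).
  by move: (qmax p); rewrite inE eqxx (bP cp cq) (better_trans bpy byq) => /(_ isT).
- rewrite /p' in qmax; case: ifP qmax => hyp qmax; last first.
    by apply: qmax; rewrite inE eqxx.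
  apply/negP => bpq.
  have := qmax y; rewrite inE eqxx => /(_ isT); rewrite (bP cy cq).
  move: hyp bpq; rewrite (bP cy cp) (bP cp cq) => h1 h2.
  by rewrite (better_trans h1 h2).
Qed.
Definition topKset (R : realFieldType) (V : finType) (f : {set V} -> R) (K : nat)
  (S : {set V}) : {set V} := [set s in S | (#|[set t in S | better f t s]| < K)%N].

Lemma topK_subset (R : realFieldType) (V : finType) (f : {set V} -> R) K (S : {set V}) :
  topKset f K S \subset S.
Proof. by apply/subsetP => x; rewrite inE => /andP[]. Qed.

Lemma topK_mono (R : realFieldType) (V : finType) (f : {set V} -> R) K (A C : {set V}) s :
  A \subset C -> s \in A -> s \in topKset f K C -> s \in topKset f K A.
Proof.
move=> AC sA; rewrite !inE sA /= => /andP[_ h]; apply: leq_ltn_trans h.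
apply: subset_leq_card; apply/subsetP => t; rewrite !inE => /andP[tA ->].
by rewrite (subsetP AC _ tA).
Qed.

Lemma topK_key (R : realFieldType) (V : finType) (f : {set V} -> R) K (C : {set V}) s :
  s \in C -> s \notin topKset f K C ->
  (K <= #|[set t in topKset f K C | better f t s]|)%N.
Proof.
set T' := [set t in topKset f K C | better f t s].
suff H : forall n t, (#|[set u in C | better f u t]| <= n)%N -> t \in C ->
   t \notin topKset f K C -> (t == s) || better f t s -> (K <= #|T'|)%N.
  by move=> sC sK; apply: (H _ s (leqnn _) sC sK); rewrite eqxx.
have Kr : forall t, t \in C -> t \notin topKset f K C ->
    (K <= #|[set u in C | better f u t]|)%N.
  by move=> t tC; rewrite inE tC /= -leqNgt.
elim=> [|n IH] t rn tC tK ts.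
  by apply: leq_trans (Kr _ tC tK) (leq_trans rn (leq0n _)).
have bs : forall u, better f u t -> better f u s.
  move=> u but; case/orP: ts => [/eqP <- //|bts]; exact: better_trans but bts.
have [H|H] := boolP ([set u in C | better f u t] \subset topKset f K C).
  apply: leq_trans (Kr _ tC tK) _; apply: subset_leq_card.
  apply/subsetP => u uin; rewrite inE (subsetP H _ uin) /=.
  by move: uin; rewrite inE => /andP[_ /bs].
case/subsetPn: H => u; rewrite inE => /andP[uC but] uK.
apply: (IH u) => //; last by rewrite bs ?orbT.
rewrite -ltnS; apply: leq_trans rn; apply: proper_card; apply/properP; split.
  apply/subsetP => w; rewrite !inE => /andP[-> bwu] /=; exact: better_trans bwu but.
by exists u; rewrite !inE ?uC ?but ?better_irr.
Qed.

Lemma topK_sub (R : realFieldType) (V : finType) (f : {set V} -> R) K (C D : {set V}) :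
  topKset f K C \subset D -> D \subset C -> topKset f K D = topKset f K C.
Proof.
move=> CD DC; apply/setP => s; apply/idP/idP => sin.
  have sD : s \in D by move: sin; rewrite inE => /andP[].
  have sC := subsetP DC _ sD.
  case: (boolP (s \in topKset f K C)) => // nK.
  have := topK_key sC nK; move: sin; rewrite inE sD /= => h1 h2.
  have : (#|[set t in topKset f K C | better f t s]| <= #|[set t in D | better f t s]|)%N.
    apply: subset_leq_card; apply/subsetP => t /setIdP[tK bt].
    by apply/setIdP; split=> //; exact: (subsetP CD).
  by move=> h3; move: (leq_ltn_trans (leq_trans h2 h3) h1); rewrite ltnn.
by apply: topK_mono DC (subsetP CD _ sin) sin.
Qed.
Lemma run_cbind (V : finType) (R A B : Type) (f : {set V} -> R) (c : Defs.comp V R A)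
  (k : A -> Defs.comp V R B) :
  run f (cbind c k) = ((run f (k (run f c).1)).1, ((run f c).2 + (run f (k (run f c).1)).2)%N).
Proof.
elim: c => [a|X g IH] /=; first by rewrite add0n; case: (run f (k a)).
by rewrite IH.
Qed.

Lemma run_eval_all (V : finType) (R : Type) (f : {set V} -> R) (vs : seq V) :
  run f (eval_all R vs) = ([seq (v, f [set v]) | v <- vs], size vs).
Proof.
elim: vs => [|v vs IH] //=. by rewrite run_cbind IH /= addn0.
Qed.

Lemma count_card (V : finType) (P : pred V) (s : seq V) :
  uniq s -> count P s = #|[set t in [set x | x \in s] | P t]|.
Proof.
rewrite -size_filter => /(filter_uniq P)/card_uniqP <-.
by apply: eq_card => t; rewrite !inE mem_filter andbC.
Qed.

Lemma mem_fst_flatten (V : finType) (R : eqType) (x : V) (recv : seq (seq (V * R))) :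
  reflect (exists2 r, r \in recv & x \in map fst r) (x \in map fst (flatten recv)).
Proof.
apply: (iffP mapP) => [[p /flattenP [r rin pin] ->]|[r rin /mapP [p pin ->]]].
  by exists r => //; exact: map_f.
by exists p => //; apply/flattenP; exists r.
Qed.

Lemma merge_ok (R : realFieldType) (V : finType) (f : {set V} -> R) K
  (st : seq (V * R)) recv :
  all (cst f) st -> (forall r, r \in recv -> all (cst f) r) -> (0 < K)%N ->
  st != [::] ->
  let u := Defs.merge K st recv in
  [/\ all (cst f) u, u != [::] &
    [set x | x \in map fst u] =
    topKset f K [set x | x \in map fst (st ++ flatten recv)]].
Proof.
move=> cst_st cst_r K0 st0 /=.
set w := undup (st ++ flatten recv).
have cw : all (cst f) w.
  apply/allP => p; rewrite mem_undup mem_cat => /orP[pin|/flattenP[r rin pin]].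
    by move/allP: cst_st; apply.
  by move/allP: (cst_r r rin); apply.
have uw : uniq (map fst w).
  rewrite map_inj_in_uniq ?undup_uniq // => p q pin qin.
  by apply: cst_eq; [move/allP: cw; apply|move/allP: cw; apply].
have cnt : forall p, p \in w -> count (fun q => betterP q p) w =
    #|[set t in [set x | x \in map fst w] | better f t p.1]|.
  move=> p pin; rewrite -count_card // count_map; apply: eq_in_count => q qin /=.
  by apply: bP; move/allP: cw; apply.
have Sw : [set x | x \in map fst (st ++ flatten recv)] = [set x | x \in map fst w].
  apply/setP => x; rewrite !inE; apply/mapP/mapP => [[p pin ->]|[p pin ->]].
    by exists p => //; rewrite /w mem_undup.
  by exists p => //; move: pin; rewrite /w mem_undup.
have wn : w != [::].
  have [p0 [l0 Est]] : exists p0 l0, st = p0 :: l0.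
    by case: (st) st0 => // p0 l0 _; exists p0, l0.
  have : p0 \in w by rewrite /w mem_undup Est inE eqxx.
  by case: (w).
rewrite Sw /Defs.merge /topK -/w; clearbody w; split.
- by apply/allP => p; rewrite mem_filter => /andP[_]; move/allP: cw; apply.
- case: w wn cw uw cnt {Sw} => [//|p l] _ cw uw cnt.
  have [qin qmax] := foldl_max cw.
  set q := foldl _ p l in qin qmax.
  have c0 : count (fun q0 => betterP q0 q) (p :: l) = 0%N.
    apply/eqP; rewrite -leqn0 leqNgt -has_count; apply/hasPn => x xin; exact: qmax.
  apply/eqP => /(congr1 (fun s => q \in s)); rewrite mem_filter qin andbT c0 K0.
  by [].
- apply/setP => x; rewrite !inE; apply/mapP/andP => [[p]|[/mapP[p pin ->] c]].
    by rewrite mem_filter => /andP[c pin] ->; rewrite map_f // -cnt.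
  by exists p => //; rewrite mem_filter pin andbT cnt.
Qed.
Lemma best_of_spec (R : realFieldType) (V : finType) (f : {set V} -> R) (vs : seq V) :
  vs != [::] -> exists b, [/\ best_of [seq (v, f [set v]) | v <- vs] = [:: (b, f [set b])],
    b \in vs & forall w, w \in vs -> ~~ better f w b].
Proof.
case: vs => [//|v vs] _.
have ca : all (cst f) [seq (v, f [set v]) | v <- v :: vs].
  by apply/allP => p /mapP[w _ ->]; rewrite /cst eqxx.
have [qin qmax] := foldl_max ca.
move: qin qmax; set q := foldl _ _ _ => qin qmax.
have qin' : q \in [seq (v0, f [set v0]) | v0 <- v :: vs] := qin.
case/mapP: qin' => w win qE.
exists w; split => //.
  by rewrite /= -/q qE.
move=> w' w'in; have := qmax (w', f [set w']) (map_f (fun v => (v, f [set v])) w'in).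
by rewrite qE /betterP /better.
Qed.

Lemma best_set_eq (R : realFieldType) (V : finType) (N : nat)
    (Vi : 'I_N -> {set V}) (f : {set V} -> R) i b :
  b \in Vi i -> (forall w, w \in Vi i -> ~~ better f w b) -> best_set Vi f i = [set b].
Proof.
move=> bin bmax; apply/setP => x; rewrite /best_set !inE.
apply/andP/eqP => [[xin /forall_inP xmax]|->]; last first.
  by split => //; apply/forall_inP => w; apply: bmax.
apply/eqP; case: (boolP (x == b)) => // xb.
by case/orP: (better_total f xb) => h; [move: (bmax _ xin)|move: (xmax _ bin)]; rewrite h.
Qed.

Fixpoint Bset (R : realFieldType) (V : finType) (N : nat) (adj : rel 'I_N)
    (Vi : 'I_N -> {set V}) (f : {set V} -> R) (t : nat) : 'I_N -> {set V} :=
  match t with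
  | 0 => fun i => best_set Vi f i
  | t'.+1 => fun i => Bset adj Vi f t' i :|: \bigcup_(j | adj i j) Bset adj Vi f t' j
  end.

Lemma Bset_up (R : realFieldType) (V : finType) (N : nat) (adj : rel 'I_N)
    (Vi : 'I_N -> {set V}) (f : {set V} -> R) t i :
  Bset adj Vi f t i \subset \bigcup_(r < N) best_set Vi f r.
Proof.
elim: t i => [|t IH] i /=.
  by apply/subsetP => x xin; apply/bigcupP; exists i.
rewrite subUset IH /=; apply/bigcupsP => j _; exact: IH.
Qed.

Lemma Bset_mono (R : realFieldType) (V : finType) (N : nat) (adj : rel 'I_N)
    (Vi : 'I_N -> {set V}) (f : {set V} -> R) n m i :
  (n <= m)%N -> Bset adj Vi f n i \subset Bset adj Vi f m i.
Proof.
move/subnK <-; elim: (m - n)%N => [|k IH] //=.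
apply: subset_trans IH _; rewrite ?addSn /=; exact: subsetUl.
Qed.

Lemma Bset_walk (R : realFieldType) (V : finType) (N : nat) (adj : rel 'I_N)
    (Vi : 'I_N -> {set V}) (f : {set V} -> R) n i r :
  walkb adj n i r -> best_set Vi f r \subset Bset adj Vi f n i.
Proof.
elim: n i => [|n IH] i /existsP[p /andP[pp /eqP pl]].
  by move: pl; rewrite (size0nil (size_tuple p)) /= => ->.
case/tupleP: p pp pl => x p /= /andP[aix pp] pl.
have : walkb adj n x r by apply/existsP; exists p; rewrite pp pl eqxx.
move/IH => sub; apply: subset_trans sub _.
apply: subset_trans (subsetUr _ _); exact: (bigcup_sup x aix).
Qed.

Lemma gdist_walk (N : nat) (adj : rel 'I_N) i r :
  connect adj i r -> walkb adj (gdist adj i r) i r.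
Proof.
case/connectP => p0 pp0 l0; case/shortenP: pp0 l0 => p pp up _ lp.
have sz : (size p < N)%N.
  by have := max_card (mem (i :: p)); rewrite card_ord (card_uniqP up).
have hw : walkb adj (size p) i r.
  apply/existsP; exists (in_tuple p); by rewrite /= pp -lp eqxx.
have hh : has (fun n => walkb adj n i r) (iota 0 N).
  by apply/hasP; exists (size p) => //; rewrite mem_iota.
have hlt : (find (fun n => walkb adj n i r) (iota 0 N) < N)%N.
  by move: hh; rewrite has_find size_iota.
by have := nth_find 0%N hh; rewrite nth_iota // add0n.
Qed.

Lemma gdist_diam (N : nat) (adj : rel 'I_N) i r : (gdist adj i r <= diameter adj)%N.
Proof.
rewrite /diameter.
apply: (leq_trans _ (@leq_bigmax _ (fun i0 => \max_(j < N) gdist adj i0 j) i)).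
exact: (@leq_bigmax _ (fun j => gdist adj i j) r).
Qed.
Lemma step_ok (R : realFieldType) (V : finType) (N : nat) (adj : rel 'I_N)
    (Vi : 'I_N -> {set V}) (f : {set V} -> R) (K : nat)
    (prev : 'I_N -> seq (V * R) * nat) (P : 'I_N -> {set V}) i :
  (0 < K)%N ->
  (forall j, [/\ all (cst f) (prev j).1, (prev j).1 != [::] &
        [set x | x \in map fst (prev j).1] = topKset f K (P j)]) ->
  forall r, r = run f (round_comp Vi K i (prev i).1 [seq (prev j).1 | j <- enum 'I_N & adj i j]) ->
  [/\ all (cst f) r.1, r.1 != [::],
      [set x | x \in map fst r.1] = topKset f K (P i :|: \bigcup_(j | adj i j) P j)
    & r.2 = 0%N].
Proof.
move=> K0 H r ->; have [c1 n1 s1] := H i.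
set recv := [seq (prev j).1 | j <- enum 'I_N & adj i j].
have crecv : forall r, r \in recv -> all (cst f) r.
  by move=> r0 /mapP[j _ ->]; case: (H j).
case E: (prev i).1 c1 n1 s1 => [//|p l] c1 _ s1.
rewrite /round_comp /=.
have [u1 u2 u3] := merge_ok c1 crecv K0 (isT : p :: l != [::]).
split => //; rewrite u3; apply: topK_sub.
- apply/subsetP => x xK; have xC := subsetP (topK_subset _ _ _) _ xK.
  rewrite inE map_cat mem_cat; case/setUP: xC => [xP|/bigcupP[j aij xP]].
    have : x \in topKset f K (P i) by apply: topK_mono (subsetUl _ _) xP xK.
    by rewrite -s1 inE => ->.
  have : x \in topKset f K (P j).
    by apply: topK_mono xP xK; apply: subset_trans (bigcup_sup j aij) (subsetUr _ _).
  case: (H j) => _ _ <-; rewrite inE => xj.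
  apply/orP; right; apply/mem_fst_flatten; exists (prev j).1 => //.
  by rewrite /recv; apply: map_f; rewrite mem_filter aij mem_enum.
- apply/subsetP => x; rewrite inE map_cat mem_cat => /orP[xi|/mem_fst_flatten[r0 rin xr]].
    have : x \in [set x | x \in map fst (p :: l)] by rewrite inE.
    by rewrite s1 => /(subsetP (topK_subset _ _ _)) xP; rewrite inE xP.
  case/mapP: rin => j; rewrite mem_filter => /andP[aij _] rE; rewrite rE in xr.
  have : x \in topKset f K (P j) by case: (H j) => _ _ <-; rewrite inE.
  move/(subsetP (topK_subset _ _ _)) => xP.
  by apply/setUP; right; apply/bigcupP; exists j.
Qed.

Lemma sim_inv (R : realFieldType) (V : finType) (N : nat) (adj : rel 'I_N)
    (Vi : 'I_N -> {set V}) (f : {set V} -> R) (K : nat) :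
  (forall i, Vi i != set0) -> (0 < K)%N -> forall t i,
  [/\ all (cst f) (sim adj Vi f K t.+1 i).1, (sim adj Vi f K t.+1 i).1 != [::],
      [set x | x \in map fst (sim adj Vi f K t.+1 i).1] = topKset f K (Bset adj Vi f t i)
    & (sim adj Vi f K t.+1 i).2 = #|Vi i|].
Proof.
move=> Vi0 K0; elim=> [|t IH] i.
  rewrite /= /round_comp !run_cbind run_eval_all /=.
  have en : enum (Vi i) != [::].
    case/set0Pn: (Vi0 i) => x xin; apply/eqP => e.
    by move: xin; rewrite -mem_enum e.
  have [b [hb bin bmax]] := best_of_spec f en.
  rewrite hb /=.
  have cst0 : all (cst f) [:: (b, f [set b])] by rewrite /= /cst eqxx.
  set recv := [seq _ | j <- _ & _].
  have crecv : forall r, r \in recv -> all (cst f) r by move=> r /mapP[j _ ->].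
  have [u1 u2 u3] := merge_ok cst0 crecv K0 isT.
  split => //; last by rewrite cardE !addn0.
  rewrite u3 (best_set_eq (b := b)); last 2 first.
  - by rewrite -mem_enum.
  - by move=> w; rewrite -mem_enum; apply: bmax.
  congr topKset; apply/setP => x; rewrite in_set in_set1 map_cat mem_cat.
  case: (boolP (x \in map fst (flatten recv))) => [/mem_fst_flatten[r /mapP[j _ ->]]//|_].
  by rewrite orbF inE.
have IH' : forall j, [/\ all (cst f) (sim adj Vi f K t.+1 j).1,
    (sim adj Vi f K t.+1 j).1 != [::] &
    [set x | x \in map fst (sim adj Vi f K t.+1 j).1] = topKset f K (Bset adj Vi f t j)].
  by move=> j; case: (IH j).
have [h1 h2 h3 h4] := step_ok (adj := adj) (Vi := Vi) (f := f) (K := K) (prev := sim adj Vi f K t.+1) (P := Bset adj Vi f t) (i := i) K0 IH' (erefl _).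
have [_ _ _ h5] := IH i.
split => //.
by rewrite -h5; change (((sim adj Vi f K t.+1 i).2 + (run f (round_comp Vi K i (sim adj Vi f K t.+1 i).1
  [seq (sim adj Vi f K t.+1 j).1 | j <- enum 'I_N & adj i j])).2)%N = (sim adj Vi f K t.+1 i).2);
  rewrite h4 addn0.
Qed.
Theorem lemma1 :
  (forall (R : realFieldType) (V : finType) (N : nat) (adj : rel 'I_N)
          (Vi : 'I_N -> {set V}) (f : {set V} -> R) (K : nat),
     symmetric adj -> irreflexive adj -> (forall i j, connect adj i j) ->
     (forall i, Vi i != set0) -> \bigcup_(i < N) Vi i = [set: V] ->
     monotone_setfun f -> submodular f -> (0 < K)%N -> (K <= N)%N ->
     forall (i : 'I_N) (t : nat), (diameter adj <= t)%N ->
       final_set adj Vi f K i t = kmax_consensus Vi f K)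
  /\
  (exists C : nat,
     forall (R : realFieldType) (V : finType) (N : nat) (adj : rel 'I_N)
            (Vi : 'I_N -> {set V}) (f : {set V} -> R) (K : nat),
     symmetric adj -> irreflexive adj -> (forall i j, connect adj i j) ->
     (forall i, Vi i != set0) -> \bigcup_(i < N) Vi i = [set: V] ->
     monotone_setfun f -> submodular f -> (0 < K)%N -> (K <= N)%N ->
     forall (i : 'I_N) (t : nat), (evals adj Vi f K i t <= C * #|Vi i|)%N).
Proof.
split.
  move=> R V N adj Vi f K _ _ conn Vi0 _ _ _ K0 _ i t dt.
  have [_ _ h _] := sim_inv adj f Vi0 K0 t i.
  rewrite /final_set h /kmax_consensus /=.
  suff -> : Bset adj Vi f t i = \bigcup_(r < N) best_set Vi f r by [].
  apply/eqP; rewrite eqEsubset Bset_up /=; apply/bigcupsP => r _.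
  apply: subset_trans (Bset_walk Vi f (gdist_walk (conn i r))) _.
  apply: Bset_mono; exact: leq_trans (gdist_diam adj i r) dt.
exists 1%N => R V N adj Vi f K _ _ _ Vi0 _ _ _ K0 _ i [|t]; first by [].
have [_ _ _ h] := sim_inv adj f Vi0 K0 t i.
by rewrite /evals h mul1n.
Qed.
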